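(* Let $p$ be a prime. The semimetric $d_p''(x,y)=|\log_p|x|_p-\log_p|y|_p|$ on the multiplicative group $\mathbf{Q}_p^*=\mathbf{Q}_p\setminus\{0\}$ is translation-invariant, compatible with the usual topology, and proper; but there is no semi-ultrametric on $\mathbf{Q}_p^*$ that is translation-invariant, compatible with the usual topology, and proper.
   Context: A semi-ultrametric is a semimetric $d$ with $d(x,z)\le\max(d(x,y),d(y,z))$. A semimetric on a topological group is compatible with the topology if every open ball is open; it is proper if closed sets bounded with respect to it are compact. $\mathbf{Q}_p^*$ has the topology induced from $\mathbf{Q}_p$. *)

(* Defs.v *)
From mathcomp Require Import all_boot all_order all_algebra.
From mathcomp Require Import all_classical all_reals all_analysis.
Set Implicit Arguments. Unset Strict Implicit. Unset Printing Implicit Defensive.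
Import Order.TTheory GRing.Theory Num.Theory.
Local Open Scope ring_scope.

Definition padic_val (p : nat) (q : rat) : int :=
  (logn p `|numq q|%N)%:Z - (logn p `|denq q|%N)%:Z.

Definition padic_abs_rat (R : realType) (p : nat) (q : rat) : R :=
  if q == 0 then 0 else ((p%:R : R) ^ (- padic_val p q))%R.

(* (K, absK) is (a model of) Q_p: the completion of Q for |.|_p, i.e. a field
   with an absolute value extending |.|_p on Q (via the canonical embedding
   ratr), in which Q is dense and which is complete. *)
Definition is_Qp (p : nat) (R : realType) (K : fieldType) (absK : K -> R) : Prop :=
  (forall x, 0 <= absK x) /\
  (forall x, absK x = 0 <-> x = 0) /\
  (forall x y, absK (x * y) = absK x * absK y) /\
  (forall x y, absK (x + y) <= absK x + absK y) /\
  (forall q : rat, absK (ratr q) = padic_abs_rat R p q) /\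
  (forall x e, 0 < e -> exists q : rat, absK (x - ratr q) < e) /\
      (forall u : nat -> K,
         (forall e, 0 < e -> exists N, forall m n, (N <= m)%N -> (N <= n)%N ->
             absK (u m - u n) < e) ->
         exists l, forall e, 0 < e -> exists N, forall n, (N <= n)%N ->
             absK (u n - l) < e).

Section Qpstar.
Variables (R : realType) (K : fieldType) (absK : K -> R).

Definition Qs_open (U : K -> Prop) : Prop :=
  (forall x, U x -> x != 0) /\
  (forall x, U x -> exists e : R, 0 < e /\
      forall y, y != 0 -> absK (y - x) < e -> U y).

Definition Qs_closed (C : K -> Prop) : Prop :=
  (forall x, C x -> x != 0) /\ Qs_open (fun x => x != 0 /\ ~ C x).

Definition Qs_compact (S : K -> Prop) : Prop :=
  (forall x, S x -> x != 0) /\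
  forall (I : Type) (U : I -> K -> Prop),
    (forall i, Qs_open (U i)) -> (forall x, S x -> exists i, U i x) ->
    exists (n : nat) (f : 'I_n -> I), forall x, S x -> exists k, U (f k) x.

Definition Qs_semimetric (d : K -> K -> R) : Prop :=
  forall x y z, x != 0 -> y != 0 -> z != 0 ->
    [/\ 0 <= d x y, d x x = 0, d x y = d y x & d x z <= d x y + d y z].

Definition Qs_semi_ultrametric (d : K -> K -> R) : Prop :=
  Qs_semimetric d /\
  forall x y z, x != 0 -> y != 0 -> z != 0 -> d x z <= Num.max (d x y) (d y z).

Definition Qs_translation_invariant (d : K -> K -> R) : Prop :=
  forall g x y, g != 0 -> x != 0 -> y != 0 -> d (g * x) (g * y) = d x y.

Definition Qs_compatible (d : K -> K -> R) : Prop :=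
  forall x r, x != 0 -> Qs_open (fun y => y != 0 /\ d x y < r).

Definition Qs_bounded (d : K -> K -> R) (S : K -> Prop) : Prop :=
  exists x0 r, x0 != 0 /\ forall y, S y -> d x0 y <= r.

Definition Qs_proper (d : K -> K -> R) : Prop :=
  forall C, Qs_closed C -> Qs_bounded d C -> Qs_compact C.

End Qpstar.

Definition dpp (p : nat) (R : realType) (K : fieldType) (absK : K -> R)
  (x y : K) : R :=
  `| ln (absK x) / ln (p%:R) - ln (absK y) / ln (p%:R) |.

(* Main.v *)
Require Import Defs.
From mathcomp Require Import all_boot all_order all_algebra.
From mathcomp Require Import all_classical all_reals all_analysis.
From mathcomp Require Import ring lra.
Import Order.TTheory GRing.Theory Num.Theory.
Local Open Scope ring_scope.

Section Padic.
Variables (p : nat) (R : realType) (K : fieldType) (absK : K -> R).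
Hypothesis hp : prime p.
Hypothesis a0 : forall x, 0 <= absK x.
Hypothesis aeq0 : forall x, absK x = 0 <-> x = 0.
Hypothesis aM : forall x y, absK (x * y) = absK x * absK y.
Hypothesis aD : forall x y, absK (x + y) <= absK x + absK y.
Hypothesis arat : forall q : rat, absK (ratr q) = padic_abs_rat R p q.

Lemma p_gt1 : (1 < p)%N. Proof. exact: prime_gt1. Qed.
Lemma pR_gt1 : 1 < (p%:R : R). Proof. by rewrite ltr1n p_gt1. Qed.
Lemma pR_gt0 : 0 < (p%:R : R). Proof. exact: lt_trans ltr01 pR_gt1. Qed.
Lemma pinv_gt0 : 0 < (p%:R : R)^-1. Proof. by rewrite invr_gt0 pR_gt0. Qed.
Lemma pinv_lt1 : (p%:R : R)^-1 < 1. Proof. by rewrite invf_lt1 ?pR_gt0 ?pR_gt1. Qed.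

Lemma abs0 : absK 0 = 0. Proof. by apply/aeq0. Qed.
Lemma abs_neq0 x : x != 0 -> 0 < absK x.
Proof. move=> hx; rewrite lt_def a0 andbT; apply/eqP => /aeq0 h; by rewrite h eqxx in hx. Qed.

Lemma abs1 : absK 1 = 1.
Proof.
have h : absK 1 = absK 1 * absK 1 by rewrite -aM mulr1.
have h1 : absK 1 != 0 by apply/eqP => /aeq0 /eqP; rewrite oner_eq0.
by apply: (mulfI h1); rewrite -h mulr1.
Qed.

Lemma absV x : x != 0 -> absK x^-1 = (absK x)^-1.
Proof.
move=> hx; have h : absK x * absK x^-1 = 1 by rewrite -aM mulfV // abs1.
have hx0 : absK x != 0 by rewrite gt_eqF // abs_neq0.
by rewrite -[absK x^-1]mul1r -(mulVf hx0) -mulrA h mulr1.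
Qed.

Lemma absX x n : absK (x ^+ n) = absK x ^+ n.
Proof. elim: n => [|n IH]; by rewrite ?expr0 ?abs1 // !exprS aM IH. Qed.

Lemma absN x : absK (- x) = absK x.
Proof.
have h : absK (-1) ^+ 2 = 1 by rewrite -absX sqrrN expr1n abs1.
have hp1 : absK (-1) = 1.
  have := a0 (-1); move: h; set a := absK (-1) => h ha.
  have : (a - 1) * (a + 1) = 0 by rewrite mulrDr mulrBl !mulr1 mul1r -expr2 h; ring.
  move/eqP; rewrite mulf_eq0 => /orP [/eqP|/eqP] h2; first by apply/eqP; rewrite -subr_eq0 h2.
  have : a + 1 > 0 by apply: (le_lt_trans ha); rewrite ltrDl ltr01.
  by rewrite h2 ltxx.
by rewrite -mulN1r aM hp1 mul1r.
Qed.

Lemma absB x y : absK (x - y) = absK (y - x).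
Proof. by rewrite -absN opprB. Qed.

Lemma abs_int (z : int) :
  absK (z%:~R) = if z == 0 then 0 else (p%:R : R) ^- (logn p `|z|).
Proof.
rewrite -ratr_int arat /padic_abs_rat intr_eq0; case: eqP => // _.
by rewrite /padic_val numq_int denq_int /= logn1 subr0 exprnN.
Qed.

Lemma abs_int_ndvd (z : int) : ~~ (p %| `|z|)%N -> absK (z%:~R) = 1.
Proof.
move=> h; rewrite abs_int; case: eqP => [hz|_].
  by move: h; rewrite hz dvdn0.
by rewrite logn_coprime ?expr0 ?invr1 // prime_coprime.
Qed.

Lemma abs_int_dvd (z : int) : (p %| `|z|)%N -> absK (z%:~R) <= (p%:R : R)^-1.
Proof.
move=> h; rewrite abs_int; case: eqP => [_|hz]; first by exact: (ltW pinv_gt0).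
have hl : (0 < logn p `|z|)%N.
  by rewrite logn_gt0 mem_primes hp h absz_gt0 andbT; apply/eqP.
rewrite lef_pV2 ?posrE ?exprn_gt0 ?pR_gt0 //.
case: (logn p `|z|) hl => // n _; rewrite exprS.
  by rewrite ler_pMr ?exprn_ege1 // ?(ltW pR_gt1) ?pR_gt0.
Qed.

Lemma abs_int_le1 (z : int) : absK (z%:~R) <= 1.
Proof.
case h: (p %| `|z|)%N; last by rewrite abs_int_ndvd ?h.
by apply: (le_trans (abs_int_dvd _ h)); exact: (ltW pinv_lt1).
Qed.

Lemma abs_nat_le1 (n : nat) : absK (n%:R) <= 1.
Proof. by rewrite -[n%:R]/((n%:Z)%:~R) abs_int_le1. Qed.


Lemma abs_sum (I : Type) (r : seq I) (F : I -> K) :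
  absK (\sum_(i <- r) F i) <= \sum_(i <- r) absK (F i).
Proof.
elim/big_rec2: _ => [|i y1 y2 _ h]; first by rewrite abs0.
by apply: le_trans (aD _ _) _; rewrite lerD2l.
Qed.

Lemma pow_bound x y n :
  absK ((x + y) ^+ n) <= n.+1%:R * (Num.max (absK x) (absK y)) ^+ n.
Proof.
set M := Num.max _ _.
rewrite exprDn; apply: le_trans (abs_sum _ _ _) _.
apply: (@le_trans _ _ (\sum_(i < n.+1) M ^+ n)).
  apply: ler_sum => i _; rewrite -mulr_natr !aM !absX.
  have hM : 0 <= M by rewrite le_max a0.
  rewrite -[M ^+ n]mulr1; apply: ler_pM.
  - by apply: mulr_ge0; apply: exprn_ge0.
  - exact: a0.
  - have -> : M ^+ n = M ^+ (n - i) * M ^+ i by rewrite -exprD subnK // -ltnS.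
    apply: ler_pM; try apply: exprn_ge0 => //; apply: lerXn2r => //;
      rewrite ?nnegrE ?le_max ?lexx ?orbT ?a0 //.
  - exact: abs_nat_le1.
by rewrite sumr_const card_ord mulr_natl.
Qed.

Lemma bernoulli (h : R) n : 0 <= h -> 1 + n%:R * h <= (1 + h) ^+ n.
Proof.
move=> h0; elim: n => [|n IH]; first by rewrite mul0r addr0 expr0.
rewrite exprS -natr1.
have e0 : 0 <= (1 + h) ^+ n by apply: exprn_ge0; lra.
have n0 : 0 <= (n%:R : R) by []. nra.
Qed.

Lemma ultra x y : absK (x + y) <= Num.max (absK x) (absK y).
Proof.
set M := Num.max _ _; set a := absK (x + y).
have hM : 0 <= M by rewrite le_max a0.
have hb : forall n, a ^+ n <= n.+1%:R * M ^+ n by move=> n; rewrite /a -absX pow_bound.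
rewrite leNgt; apply/negP => hlt.
case: (eqVneq M 0) => [M0|Mn0].
  have := hb 1%N; rewrite M0 !expr1 mulr0 => ha.
  by move: hlt; rewrite M0 ltNge ha.
have Mp : 0 < M by rewrite lt_def Mn0 hM.
set t := a / M.
have t1 : 1 < t by rewrite /t ltr_pdivlMr // mul1r.
have ht : forall n, t ^+ n <= n.+1%:R.
  move=> n; rewrite /t exprMn exprVn ler_pdivrMr ?exprn_gt0 //.
set h := t - 1.
have h0 : 0 < h by rewrite /h subr_gt0.
have h2 : 0 < h ^+ 2 by rewrite exprn_gt0.
set k := Num.Def.archi_bound (2 / h ^+ 2).
have hk : 2 / h ^+ 2 < k%:R by apply: archi_boundP; rewrite divr_ge0 ?(ltW h2).
have hk2 : 2 < k%:R * h ^+ 2 by rewrite -ltr_pdivrMr.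
have hk0 : 0 <= (k%:R : R) by [].
have e1 := bernoulli _ k (ltW h0).
have e2 := ht (k + k)%N.
rewrite exprD -[(k + k).+1]addn1 !natrD in e2.
have tt : t = 1 + h by rewrite /h; ring.
rewrite -tt in e1.
have e3 : 0 <= 1 + k%:R * h by apply: addr_ge0 => //; apply: mulr_ge0 => //; exact: ltW.
have e4 : (1 + k%:R * h) ^+ 2 <= t ^+ k * t ^+ k.
  by rewrite expr2; apply: ler_pM.
rewrite expr2 in h2 hk2 e4.
nra.
Qed.


Lemma ultra_sub x y z : absK (x - z) <= Num.max (absK (x - y)) (absK (y - z)).
Proof. by have := ultra (x - y) (y - z); rewrite addrA subrK. Qed.

Lemma ultra_eq x y : absK (y - x) < absK x -> absK y = absK x.
Proof.
move=> h; apply/eqP; rewrite eq_le; apply/andP; split.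
  have := ultra x (y - x); rewrite addrC subrK => h1.
  by apply: (le_trans h1); rewrite ge_max lexx (ltW h).
have := ultra y (x - y); rewrite addrC subrK => h1.
move: h1; rewrite le_max => /orP [] // h1.
by move: h; rewrite -absB ltNge h1.
Qed.

Lemma abs_p : absK (p%:R) = (p%:R : R)^-1.
Proof.
rewrite -[p%:R]/((p%:Z)%:~R) abs_int.
have -> : (p%:Z == 0) = false by apply/negbTE; rewrite eqz_nat -lt0n prime_gt0.
by rewrite logn_prime // eqxx expr1.
Qed.

Lemma ratrE (q : rat) : ratr q = ((numq q)%:~R : K) / (denq q)%:~R.
Proof. by []. Qed.

Lemma intK_neq0 (z : int) : z != 0 -> (z%:~R : K) != 0.
Proof.
move=> hz; apply/eqP => h; have := abs_int z; rewrite h abs0 (negbTE hz) => h2.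
have : (0 : R) < (p%:R : R) ^- (logn p `|z|) by rewrite invr_gt0 exprn_gt0 ?pR_gt0.
by rewrite -h2 ltxx.
Qed.

Lemma den_abs (q : rat) : absK (ratr q) <= 1 -> absK ((denq q)%:~R) = 1.
Proof.
move=> hq; case hd: (p %| `|denq q|)%N; last by rewrite abs_int_ndvd ?hd.
have hn : ~~ (p %| `|numq q|)%N.
  apply/negP => hn; have := coprime_num_den q; rewrite /coprime => /eqP hg.
  have : (p %| gcdn `|numq q| `|denq q|)%N by rewrite dvdn_gcd hn hd.
  by rewrite hg dvdn1 => /eqP hp1; move: p_gt1; rewrite hp1.
have hdK : absK ((denq q)%:~R) <= (p%:R : R)^-1 by exact: abs_int_dvd.
have hd0 : 0 < absK ((denq q)%:~R : K).
  apply: abs_neq0; by rewrite intK_neq0 ?denq_neq0.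
move: hq; rewrite ratrE aM absV; last by rewrite intK_neq0 ?denq_neq0.
rewrite abs_int_ndvd // mul1r invf_le1 // => h1.
have := le_trans h1 hdK => h2.
by move: (lt_le_trans pinv_lt1 h2); rewrite ltxx.
Qed.

Hypothesis adense : forall x e, 0 < e -> exists q : rat, absK (x - ratr q) < e.

Lemma discrete x : absK x < 1 -> absK x <= (p%:R : R)^-1.
Proof.
move=> hx; case: (eqVneq x 0) => [->|x0]; first by rewrite abs0 ltW ?pinv_gt0.
have [q hq] := adense x _ (abs_neq0 _ x0).
have eq1 : absK (ratr q) = absK x by apply: ultra_eq; rewrite absB.
have hd : absK ((denq q)%:~R) = 1 by apply: den_abs; rewrite eq1 ltW.
have e2 : absK (ratr q) = absK ((numq q)%:~R).
  by rewrite ratrE aM absV ?intK_neq0 ?denq_neq0 // hd invr1 mulr1.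
case hn: (p %| `|numq q|)%N; first by rewrite -eq1 e2 abs_int_dvd.
by move: hx; rewrite -eq1 e2 abs_int_ndvd ?hn // ltxx.
Qed.

Lemma digit w : absK w <= 1 -> exists d, (d < p)%N /\ absK (w - d%:R) <= (p%:R : R)^-1.
Proof.
move=> hw; have [q hq] := adense w _ ltr01.
have hq1 : absK (ratr q) <= 1.
  have := ultra w (ratr q - w); rewrite addrC subrK => h.
  by apply: (le_trans h); rewrite ge_max hw -absB ltW.
have hd := den_abs q hq1.
set n := numq q; set m := denq q.
have hmp : ~~ (p %| `|m|)%N.
  apply/negP => h; have := abs_int_dvd _ h; rewrite hd => h2.
  by move: (le_lt_trans h2 pinv_lt1); rewrite ltxx.
have hcop : coprimez m p.
  by rewrite coprimezE /= coprime_sym prime_coprime.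
have [u [v huv]] := Bezoutz m p.
have hg : gcdz m p = 1 by apply/eqP.
rewrite hg in huv.
set d0 := n * u.
set dz := (d0 %% p)%Z.
set Q := (d0 %/ p)%Z.
have pz0 : (p%:Z) != 0 by rewrite eqz_nat -lt0n prime_gt0.
have dz0 : 0 <= dz by apply: modz_ge0.
have dzp : dz < p by apply: ltz_pmod; rewrite ltz_nat prime_gt0.
have h0 := divz_eq d0 p; rewrite -/Q -/dz /d0 in h0.
have eQ : dz = n * u - Q * p by rewrite h0; ring.
have key : n - dz * m = p%:Z * (n * v + Q * m).
  rewrite eQ; have -> : n - (n * u - Q * p) * m = (n - n * (u * m + v * p)) + n * v * p + Q * p * m by ring.
  rewrite huv; ring.
exists `|dz|%N; split.
  by rewrite -ltz_nat gez0_abs.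
have edz : ((`|dz|%N)%:R : K) = dz%:~R by rewrite -[(_)%:R]/(((`|dz|%N)%:Z)%:~R) gez0_abs.
have mK0 : (m%:~R : K) != 0 by rewrite intK_neq0 ?denq_neq0.
have eK : ratr q - (`|dz|%N)%:R = (n - dz * m)%:~R / (m%:~R : K).
  by rewrite edz ratrE intrB intrM; field.
have h1 : absK (ratr q - (`|dz|%N)%:R) <= (p%:R : R)^-1.
  rewrite eK aM absV // hd invr1 mulr1 key; apply: abs_int_dvd.
  by rewrite abszM dvdn_mulr.
have := ultra_sub w (ratr q) (`|dz|%N)%:R => h2.
apply: (le_trans h2); rewrite ge_max h1 andbT.
by apply: discrete.
Qed.

Lemma ball_split t c x : t != 0 -> absK (x - c) <= absK t ->
  exists d, (d < p)%N /\ absK (x - (c + d%:R * t)) <= absK t * (p%:R : R)^-1.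
Proof.
move=> t0 hx.
have ht : 0 < absK t by apply: abs_neq0.
have hw1 : absK ((x - c) / t) <= 1 by rewrite aM absV // ler_pdivrMr // mul1r.
have [d [hd hw]] := digit _ hw1.
exists d; split => //.
have -> : x - (c + d%:R * t) = ((x - c) / t - d%:R) * t by field.
by rewrite aM mulrC ler_pM2l.
Qed.

Definition Cov {I : Type} (U : I -> K -> Prop) (A : K -> Prop) :=
  exists n (f : 'I_n -> I), forall x, A x -> exists k, U (f k) x.

Lemma cov_mono I U (A B : K -> Prop) : (forall x, A x -> B x) -> @Cov I U B -> Cov U A.
Proof. move=> hAB [n [f hf]]; exists n, f => x /hAB; exact: hf. Qed.

Arguments cov_mono {I U A B}.

Lemma cov_empty I U (A : K -> Prop) : (forall x, ~ A x) -> @Cov I U A.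
Proof. move=> h; exists 0%N, (fun k => (ffun0 (rT := fun _ => I) (card_ord 0)) k) => x /h []. Qed.

Arguments cov_empty {I U A}.

Lemma cov_union I U (A B : K -> Prop) :
  @Cov I U A -> Cov U B -> Cov U (fun x => A x \/ B x).
Proof.
move=> [n1 [f1 h1]] [n2 [f2 h2]].
exists (n1 + n2)%N, (fun k => match fintype.split k with inl a => f1 a | inr b => f2 b end).
move=> x [/h1 [k hk]|/h2 [k hk]].
  by exists (unsplit (inl k)); rewrite unsplitK.
by exists (unsplit (inr k)); rewrite unsplitK.
Qed.

Arguments cov_union {I U A B}.

Lemma cov_big I U (A : nat -> K -> Prop) N :
  (forall d, (d < N)%N -> @Cov I U (A d)) ->
  Cov U (fun x => exists d, (d < N)%N /\ A d x).
Proof.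
elim: N => [|N IH] h.
  by apply: cov_empty => x [d []].
apply: (@cov_mono _ _ _ (fun x => (exists d, (d < N)%N /\ A d x) \/ A N x)).
  move=> x [d [hd hx]]; case: (ltngtP d N) => [lt|gt|eq].
  - by left; exists d.
  - by move: hd; rewrite ltnS leqNgt gt.
  - by right; rewrite -eq.
apply: cov_union; first by apply: IH => d hd; apply: h; apply: ltnW.
exact: h.
Qed.

Arguments cov_big {I U A N}.

Hypothesis acomp : forall u : nat -> K,
  (forall e, 0 < e -> exists N, forall m n, (N <= m)%N -> (N <= n)%N ->
      absK (u m - u n) < e) ->
  exists l, forall e, 0 < e -> exists N, forall n, (N <= n)%N ->
      absK (u n - l) < e.

Lemma pow_small (a e : R) : 0 < e -> exists k, a * ((p%:R : R)^-1) ^+ k < e.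
Proof.
move=> he.
have [a0'|ap] := lerP a 0.
  exists 0%N; rewrite expr0 mulr1; exact: le_lt_trans a0' he.
set k := Num.Def.archi_bound (a / e).
have hk : a / e < k%:R by apply: archi_boundP; rewrite divr_ge0 // ltW.
have hk2 : (k%:R : R) < (p%:R) ^+ k by rewrite -natrX ltr_nat ltn_expl // p_gt1.
exists k; rewrite exprVn ltr_pdivrMr ?exprn_gt0 ?pR_gt0 //.
have := lt_trans hk hk2; rewrite ltr_pdivrMr // mulrC //.
Qed.

Lemma compact_ann (C : K -> Prop) (t0 : K) (L : R) :
  Qs_closed absK C -> t0 != 0 -> (forall y, C y -> absK y <= absK t0) ->
  0 < L -> (forall y, C y -> L <= absK y) -> Qs_compact absK C.
Proof.
move=> [Cnz Copen] t00 Cb L0 CL.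
split => // I U Uopen Ucov.
apply: contrapT => nC.
pose pi : K := p%:R.
have pi0 : pi != 0 by apply/eqP => h; move: abs_p; rewrite -/pi h abs0 => /eqP; rewrite eq_sym invr_eq0 gt_eqF // pR_gt0.
pose tn n := t0 * pi ^+ n.
pose rn n := absK t0 * ((p%:R : R)^-1) ^+ n.
have tnE n : absK (tn n) = rn n by rewrite aM absX abs_p.
have tn0 n : tn n != 0 by rewrite mulf_neq0 // expf_neq0.
have rnS n : rn n.+1 = rn n * (p%:R : R)^-1 by rewrite /rn exprSr mulrA.
have rn0 n : 0 < rn n by rewrite -tnE abs_neq0.
have rn_le m n : (n <= m)%N -> rn m <= rn n.
  move=> /subnK <-; rewrite /rn addnC exprD mulrA ler_piMr ?mulr_ge0 ?a0 ?exprn_ge0 ?(ltW pinv_gt0) //.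
  by rewrite exprn_ile1 ?(ltW pinv_gt0) ?(ltW pinv_lt1).
have rn_small e : 0 < e -> exists n, rn n < e by move=> he; exact: pow_small.
pose Bl c n := fun y => C y /\ absK (y - c) <= rn n.
pose P n c := ~ Cov U (Bl c n).
pose Q n c c' := P n.+1 c' /\ absK (c' - c) <= rn n.
have step n c : P n c -> exists c', Q n c c'.
  move=> hP; apply: contrapT => hn; apply: hP.
  have hcov : forall d, (d < p)%N -> Cov U (Bl (c + d%:R * tn n) n.+1).
    move=> d hd; apply: contrapT => hnc; apply: hn; exists (c + d%:R * tn n); split => //.
    rewrite addrC addKr aM tnE -[X in _ <= X]mul1r ler_pM2r //; exact: abs_nat_le1.
  apply: cov_mono (cov_big hcov) => y [Cy hy].
  have hy' : absK (y - c) <= absK (tn n) by rewrite tnE.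
  have [d [hd hd2]] := ball_split _ _ _ (tn0 n) hy'.
  exists d; split => //; split => //; by rewrite rnS -tnE.
pose stepc n c := match pselect (exists c', Q n c c') with
                  | left h => proj1_sig (cid h) | right _ => c end.
pose cs := fix cs n := match n with 0%N => 0 | m.+1 => stepc m (cs m) end.
have Pcs n : P n (cs n) /\ (forall m, n = m.+1 -> absK (cs n - cs m) <= rn m).
  elim: n => [|n [IH _]].
    split => // hc; apply: nC; apply: cov_mono hc => y Cy; split => //.
    by rewrite /= subr0 /rn expr0 mulr1 Cb.
  have -> : cs n.+1 = stepc n (cs n) by [].
  rewrite /stepc; case: pselect => [h|h]; last by case: (h (step n (cs n) IH)).
  case: (cid h) => c' [hP hd] /=; split => // m [<-] //.
have Pn n : P n (cs n) by case: (Pcs n).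
have cstep n : absK (cs n.+1 - cs n) <= rn n by case: (Pcs n.+1) => _ /(_ n erefl).
have cauchy n m : (n <= m)%N -> absK (cs m - cs n) <= rn n.
  move=> /subnK <-; elim: (m - n)%N => [|k IH]; first by rewrite add0n subrr abs0 ltW.
  apply: le_trans (ultra_sub _ (cs (k + n)%N) _) _; rewrite ge_max IH andbT addSn.
  by apply: le_trans (cstep _) _; apply: rn_le; rewrite leq_addl.
have [l hl] : exists l, forall e, 0 < e -> exists N, forall n, (N <= n)%N ->
      absK (cs n - l) < e.
  apply: acomp => e he; have [N hN] := rn_small e he; exists N => m n hm hn.
  apply: (le_lt_trans (ultra_sub _ (cs N) _)); rewrite gt_max.
  by rewrite !(le_lt_trans _ hN) // ?cauchy // absB cauchy.
have near n : absK (cs n - l) <= rn n.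
  have [N hN] := hl _ (rn0 n).
  apply: le_trans (ultra_sub _ (cs (maxn N n)) _) _; rewrite ge_max.
  by rewrite absB cauchy ?leq_maxr // ltW // hN // leq_maxl.
have ex_s n : exists s, C s /\ absK (s - l) <= rn n.
  apply: contrapT => hn; apply: (Pn n); apply: cov_empty => y [Cy hy]; apply: hn.
  exists y; split => //; apply: le_trans (ultra_sub _ (cs n) _) _.
  by rewrite ge_max hy near.
have l0 : l != 0.
  apply/eqP => l0; have [n hn] := rn_small L L0; have [s [Cs hs]] := ex_s n.
  by move: (CL s Cs); rewrite leNgt (le_lt_trans _ hn) // -(subr0 s) -l0.
have Cl : C l.
  apply: contrapT => nCl; have [e [he1 he2]] := Copen.2 l (conj l0 nCl).
  have [n hn] := rn_small e he1; have [s [Cs hs]] := ex_s n.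
  by have [] := he2 s (Cnz s Cs) (le_lt_trans hs hn).
have [i Ui] := Ucov l Cl.
have [e [he1 he2]] := (Uopen i).2 l Ui.
have [n hn] := rn_small e he1.
apply: (Pn n); exists 1%N, (fun _ => i) => y [Cy hy]; exists ord0.
apply: he2; first exact: Cnz.
apply: le_lt_trans (ultra_sub _ (cs n) _) _; rewrite gt_max.
by rewrite !(le_lt_trans _ hn) // near.
Qed.


Lemma pi0 : (p%:R : K) != 0.
Proof. by apply/eqP => h; move: abs_p; rewrite h abs0 => /eqP; rewrite eq_sym invr_eq0 gt_eqF // pR_gt0. Qed.

Lemma big_elt (B : R) : exists k, B < absK (((p%:R : K)^-1) ^+ k).
Proof.
set k := Num.Def.archi_bound `|B|.
have hk : `|B| < k%:R by apply: archi_boundP.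
have hk2 : (k%:R : R) < (p%:R) ^+ k by rewrite -natrX ltr_nat ltn_expl // p_gt1.
exists k; rewrite absX absV ?pi0 // abs_p invrK.
by apply: le_lt_trans (ler_norm B) (lt_trans hk hk2).
Qed.

Lemma dpp_semi : Qs_semimetric (dpp p absK).
Proof.
move=> x y z _ _ _; rewrite /dpp; split.
- exact: normr_ge0.
- by rewrite subrr normr0.
- exact: distrC.
- exact: ler_distD.
Qed.

Lemma dpp_inv : Qs_translation_invariant (dpp p absK).
Proof.
move=> g x y g0 x0 y0; rewrite /dpp !aM !lnM ?posrE ?abs_neq0 //.
congr (`|_|); rewrite !mulrDl; ring.
Qed.

Lemma dpp_compat : Qs_compatible absK (dpp p absK).
Proof.
move=> x r x0; split; first by move=> y [].
move=> y [y0 hy]; exists (absK y); split; first exact: abs_neq0.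
move=> z z0 hz; split => //.
by rewrite /dpp (ultra_eq _ _ hz).
Qed.

Lemma dpp_proper : Qs_proper absK (dpp p absK).
Proof.
move=> C Cc [x0 [r [x00 hb]]].
set lp := ln (p%:R : R).
have lp0 : 0 < lp by apply: ln_gt0; exact: pR_gt1.
set a := ln (absK x0) / lp.
have hy y : C y -> a - r <= ln (absK y) / lp <= a + r.
  move=> Cy; have := hb y Cy; rewrite /dpp -/lp -/a distrC ler_distl //.
have lnE y : y != 0 -> absK y = expR ((ln (absK y) / lp) * lp).
  by move=> y0; rewrite divfK ?gt_eqF // lnK // posrE abs_neq0.
have [k hk] := big_elt (expR ((a + r) * lp)).
apply: (compact_ann _ (((p%:R : K)^-1) ^+ k) (expR ((a - r) * lp))) => //.
- by rewrite expf_neq0 // invr_eq0 pi0.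
- move=> y Cy; apply: ltW; apply: le_lt_trans hk.
  rewrite (lnE y (Cc.1 y Cy)) ler_expR ler_pM2r //.
  by case/andP: (hy y Cy).
- exact: expR_gt0.
- move=> y Cy; rewrite (lnE y (Cc.1 y Cy)) ler_expR ler_pM2r //.
  by case/andP: (hy y Cy).
Qed.


Lemma no_ultra : ~ (exists d : K -> K -> R,
       Qs_semi_ultrametric d /\ Qs_translation_invariant d /\
       Qs_compatible absK d /\ Qs_proper absK d).
Proof.
move=> [d [[dsm dult] [dinv [dcomp dprop]]]].
set g : K := (p%:R)^-1.
have g0 : g != 0 by rewrite invr_eq0 pi0.
have gn0 n : g ^+ n != 0 by rewrite expf_neq0.
have one0 : (1 : K) != 0 := oner_neq0 K.
have dxx x : x != 0 -> d x x = 0 by move=> x0; case: (dsm x x x x0 x0 x0).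
have dsym x y : x != 0 -> y != 0 -> d x y = d y x by move=> x0 y0; case: (dsm x y x x0 y0 x0).
set c := d 1 g.
have c0 : 0 <= c by case: (dsm 1 g 1 one0 g0 one0).
have hgn n : d 1 (g ^+ n) <= c.
  elim: n => [|n IH]; first by rewrite expr0 dxx.
  apply: le_trans (dult 1 (g ^+ n) (g ^+ n.+1) one0 (gn0 n) (gn0 n.+1)) _.
  by rewrite ge_max IH /= exprSr -{1}(mulr1 (g ^+ n)) dinv.
set r := c + 1.
have r0 : 0 < r by rewrite /r ltr_wpDl // ltr01.
pose B := fun y : K => y != 0 /\ d 1 y < r.
have Bc : Qs_closed absK B.
  split; first by move=> y [].
  split; first by move=> y [].
  move=> x [x0 nBx].
  have hx : r <= d 1 x by rewrite leNgt; apply/negP => h; apply: nBx.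
  have hxx : d x x < r by rewrite dxx.
  have [e [e0 he]] := (dcomp x r x0).2 x (conj x0 hxx).
  exists e; split => // y y0 hy; split => //; move=> [_ hBy].
  have [_ hxy] := he y y0 hy.
  have := dult 1 y x one0 y0 x0; rewrite (dsym y x) // => h.
  have hm : Num.max (d 1 y) (d x y) < r by rewrite gt_max hBy hxy.
  by move: (le_lt_trans h hm); rewrite ltNge hx.
have Bb : Qs_bounded d B by exists 1, r; split => // y [_ /ltW].
have [_ Bcomp] := dprop B Bc Bb.
pose U (k : nat) := fun y : K => y != 0 /\ absK y < k%:R.
have Uo k : Qs_open absK (U k).
  split; first by move=> y [].
  move=> y [y0 hy]; exists (k%:R - absK y); split; first by rewrite subr_gt0.
  move=> z z0 hz; split => //; have := aD (z - y) y; rewrite subrK => h.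
  apply: le_lt_trans h _; by rewrite -ltrBrDr.
have Ucov : forall y, B y -> exists k, U k y.
  move=> y [y0 _]; exists (Num.Def.archi_bound (absK y)); split => //.
  exact: archi_boundP (a0 y).
have [n [f hf]] := Bcomp nat U Uo Ucov.
set M := (\max_(k : 'I_n) f k)%N.
have [m hm] := big_elt M%:R.
have Bg : B (g ^+ m) by split => //; apply: le_lt_trans (hgn m) _; rewrite /r ltrDl ltr01.
have [k [_ hk]] := hf _ Bg.
have hfk : ((f k)%:R : R) <= M%:R by rewrite ler_nat; exact: leq_bigmax.
by move: (lt_trans (lt_le_trans hk hfk) hm); rewrite ltxx.
Qed.

End Padic.

Theorem mainTheorem11 (p : nat) (R : realType) (K : fieldType) (absK : K -> R) :
  prime p -> is_Qp p absK ->
  (Qs_semimetric (dpp p absK) /\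
   Qs_translation_invariant (dpp p absK) /\
   Qs_compatible absK (dpp p absK) /\
   Qs_proper absK (dpp p absK)) /\
  ~ (exists d : K -> K -> R,
       Qs_semi_ultrametric d /\ Qs_translation_invariant d /\
       Qs_compatible absK d /\ Qs_proper absK d).
Proof.
move=> hp [a0 [aeq0 [aM [aD [arat [adense acomp]]]]]].
split; last by eapply no_ultra; eassumption.
split; first exact: dpp_semi.
split; first by eapply dpp_inv; eassumption.
split; first by eapply dpp_compat; eassumption.
by eapply dpp_proper; eassumption.
Qed.
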